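(* There is a universal constant $C>0$ such that for every positive integer $T$, $x \in \{0,1\}^T$ and $p \in [0,1]^T$, there exist a set $S \subseteq [0,1]$ with $|S| \le C\sqrt{T}$ and distributions $\mathcal{D}_1,\ldots,\mathcal{D}_T$ supported on $S$ such that $\mathcal{D} = (\mathcal{D}_1,\ldots,\mathcal{D}_T) \in \underline{\mathcal{C}}(x)$ and $\|p - \mathcal{D}\|_1 \le \mathsf{LowerCalDist}(x,p) + C\sqrt{T}$.
   Context: Let $\underline{\mathcal{C}}(x)$ be the set of $T$-tuples $\mathcal{D} = (\mathcal{D}_1,\ldots,\mathcal{D}_T)$ of probability distributions, each with finite support contained in $[0,1]$, such that $\sum_{t=1}^T (x_t - \alpha)\mathcal{D}_t(\alpha) = 0$ for every $\alpha \in [0,1]$. For such $\mathcal{D}$, $\|p - \mathcal{D}\|_1 = \sum_{t=1}^T \mathbb{E}_{q_t \sim \mathcal{D}_t}|p_t - q_t|$, and $\mathsf{LowerCalDist}(x,p) = \inf_{\mathcal{D} \in \underline{\mathcal{C}}(x)} \|p - \mathcal{D}\|_1$. *)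

(* Defs.v *)
From HB Require Import structures.
From mathcomp Require Import all_boot all_order all_algebra.
From mathcomp Require Import boolp classical_sets functions cardinality fsbigop reals.
Set Implicit Arguments. Unset Strict Implicit. Unset Printing Implicit Defensive.
Import Order.TTheory GRing.Theory Num.Theory.
Local Open Scope classical_set_scope.
Local Open Scope ring_scope.

(* A probability distribution on R with finite support, represented by its
   probability mass function d : R -> R. *)
Definition fsupp (R : realType) (d : R -> R) : set R := [set a | d a != 0].

Definition is_fdist01 (R : realType) (d : R -> R) : Prop :=
  [/\ finite_set (fsupp d),
      (forall a, 0 <= d a),
      fsupp d `<=` `[0, 1]%classic
    & \sum_(a \in fsupp d) d a = 1].

Definition lowerCal (R : realType) (T : nat) (x : 'I_T -> R)
  (D : 'I_T -> R -> R) : Prop :=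
  (forall t, is_fdist01 (D t)) /\
  (forall a : R, a \in `[0, 1]%classic ->
       \sum_(t < T) (x t - a) * D t a = 0).

Definition l1dist (R : realType) (T : nat) (p : 'I_T -> R)
  (D : 'I_T -> R -> R) : R :=
  \sum_(t < T) \sum_(a \in fsupp (D t)) D t a * `|p t - a|.

Definition LowerCalDist (R : realType) (T : nat) (x p : 'I_T -> R) : R :=
  inf [set l1dist p D | D in lowerCal x].

(* Main.v *)
Require Import Defs.
From HB Require Import structures.
From mathcomp Require Import all_boot all_order all_algebra.
From mathcomp Require Import boolp classical_sets functions cardinality fsbigop reals.
From mathcomp Require Import ring lra.
From mathcomp Require finmap.
Import Order.TTheory GRing.Theory Num.Theory.
Local Open Scope classical_set_scope.
Local Open Scope ring_scope.

Lemma fs2seq (R : realType) (d f : R -> R) (U : seq R) :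
  uniq U -> (forall a, d a != 0 -> a \in U) -> (forall a, d a = 0 -> f a = 0) ->
  \sum_(a \in fsupp d) f a = \sum_(a <- U) f a.
Proof.
move=> uU sU f0; apply: fsbig_fwiden => //.
- move=> a [_ /=] na; apply: f0; apply/eqP; apply: contra_notT na => na.
  exact: na.
Qed.

Section Round.
Variable R : realType.
Variables (T n : nat) (x : 'I_T -> R) (D : 'I_T -> R -> R) (U : seq R).
Hypothesis Hx : forall t, x t = 0 \/ x t = 1.
Hypothesis HD0 : forall t a, 0 <= D t a.
Hypothesis HU : uniq U.
Hypothesis HsU : forall t a, D t a != 0 -> a \in U.
Hypothesis HU01 : forall a, a \in U -> 0 <= a <= 1.
Hypothesis Hsum : forall t, \sum_(a <- U) D t a = 1.
Hypothesis Hcal : forall a, a \in U -> \sum_(t < T) (x t - a) * D t a = 0.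

Definition bk (a : R) : 'I_n.+1 := inord (minn (Num.truncn (a * n.+1%:R)) n).

Lemma bkP a : 0 <= a <= 1 -> (bk a)%:R <= a * n.+1%:R <= (bk a)%:R + 1.
Proof.
move=> /andP[a0 a1].
have am0 : 0 <= a * n.+1%:R by rewrite mulr_ge0.
rewrite /bk inordK; last by rewrite ltnS geq_minr.
have := truncn_itv am0; set k := Num.truncn _ => /andP[k1 k2].
case: (leqP k n) => h.
  by rewrite k1 natr1 ltW.
have hn : n%:R <= k%:R :> R by rewrite ler_nat ltnW.
apply/andP; split; first exact: le_trans hn k1.
rewrite natr1 -[X in _ <= X]mul1r ler_wpM2r //.
Qed.

Definition M t (j : 'I_n.+1) := \sum_(a <- U | bk a == j) D t a.
Definition N j := \sum_(t < T) M t j.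
Definition N1 j := \sum_(t < T) x t * M t j.
Definition aj j := N1 j / N j.
Definition S := undup [seq aj j | j <- enum 'I_n.+1].
Definition D' t c := \sum_(j < n.+1 | aj j == c) M t j.

Lemma part (F : R -> R) :
  \sum_(j < n.+1) \sum_(a <- U | bk a == j) F a = \sum_(a <- U) F a.
Proof.
under eq_bigr do rewrite big_mkcond.
rewrite exchange_big /=; apply: eq_bigr => a _.
by rewrite -big_mkcond /= (big_pred1 (bk a)) // => j /=; rewrite eq_sym.
Qed.

Lemma M_ge0 t j : 0 <= M t j.
Proof. by apply: sumr_ge0 => a _. Qed.

Lemma N1_ge0 j : 0 <= N1 j.
Proof.
apply: sumr_ge0 => t _; apply: mulr_ge0; last exact: M_ge0.
by case: (Hx t) => ->.
Qed.

Lemma N1_leN j : N1 j <= N j.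
Proof.
apply: ler_sum => t _; case: (Hx t) => ->; first by rewrite mul0r M_ge0.
by rewrite mul1r.
Qed.

Lemma aj01 j : 0 <= aj j <= 1.
Proof.
have h0 := N1_ge0 j; have h1 := N1_leN j.
rewrite /aj; have [N0|Npos] := eqVneq (N j) 0.
  by rewrite N0 invr0 mulr0 lexx ler01.
have Np : 0 < N j by rewrite lt_def Npos (le_trans h0 h1).
by rewrite divr_ge0 ?(le_trans h0 h1) //= ler_pdivrMr // mul1r.
Qed.

Lemma N1_eq j : N1 j = \sum_(a <- U | bk a == j) a * \sum_(t < T) D t a.
Proof.
rewrite /N1 /M; under eq_bigr do rewrite mulr_sumr.
rewrite exchange_big /= big_seq_cond [RHS]big_seq_cond.
apply: eq_bigr => a /andP[aU _].
rewrite mulr_sumr; apply/eqP; rewrite -subr_eq0 -sumrB; apply/eqP; rewrite -[RHS](Hcal _ aU).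
by apply: eq_bigr => t _; rewrite mulrBl.
Qed.

Lemma N_eq j : N j = \sum_(a <- U | bk a == j) \sum_(t < T) D t a.
Proof. by rewrite /N /M exchange_big. Qed.

Lemma ajP j : 0 < N j -> j%:R <= aj j * n.+1%:R <= j%:R + 1.
Proof.
move=> Np.
have H1 : j%:R * N j <= n.+1%:R * N1 j.
  rewrite N_eq N1_eq mulr_sumr mulr_sumr big_seq_cond [X in _ <= X]big_seq_cond.
  apply: ler_sum => a /andP[aU /eqP <-].
  have := bkP _ (HU01 _ aU) => /andP[h1 h2].
  rewrite mulrA; apply: ler_wpM2r; first by apply: sumr_ge0 => t _.
  by rewrite mulrC.
have H2 : n.+1%:R * N1 j <= (j%:R + 1) * N j.
  rewrite N_eq N1_eq mulr_sumr mulr_sumr big_seq_cond [X in _ <= X]big_seq_cond.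
  apply: ler_sum => a /andP[aU /eqP <-].
  have := bkP _ (HU01 _ aU) => /andP[h1 h2].
  rewrite mulrA; apply: ler_wpM2r; first by apply: sumr_ge0 => t _.
  by rewrite mulrC.
rewrite /aj mulrAC ler_pdivlMr // ler_pdivrMr // [N1 j * _]mulrC H1 /=.
exact: H2.
Qed.

Lemma D'_ge0 t c : 0 <= D' t c.
Proof. by apply: sumr_ge0 => j _; apply: M_ge0. Qed.

Lemma ajS j : aj j \in S.
Proof. by rewrite mem_undup map_f // mem_enum. Qed.

Lemma D'_supp t c : D' t c != 0 -> c \in S.
Proof.
apply: contraR => cS; rewrite /D' big_pred0 // => j.
apply/negbTE; apply: contraNneq cS => <-; exact: ajS.
Qed.

Lemma S01 c : c \in S -> 0 <= c <= 1.
Proof. by rewrite mem_undup => /mapP[j _ ->]; apply: aj01. Qed.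

Lemma size_S : (size S <= n.+1)%N.
Proof. by rewrite (leq_trans (size_undup _)) // size_map size_enum_ord. Qed.

Lemma G (g : 'I_n.+1 -> R) :
  \sum_(c <- S) \sum_(j < n.+1 | aj j == c) g j = \sum_(j < n.+1) g j.
Proof.
under eq_bigr do rewrite big_mkcond.
rewrite exchange_big /=; apply: eq_bigr => j _.
rewrite (bigD1_seq (aj j)) ?undup_uniq ?ajS //= eqxx big1 ?addr0 //.
by move=> c /negbTE; rewrite eq_sym => ->.
Qed.

Lemma sumD' t : \sum_(c <- S) D' t c = 1.
Proof. by rewrite /D' G /M part Hsum. Qed.

Lemma cal' c : \sum_(t < T) (x t - c) * D' t c = 0.
Proof.
rewrite /D'; under eq_bigr do rewrite mulr_sumr.
rewrite exchange_big /=; apply: big1 => j /eqP <-.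
have -> : \sum_(t < T) (x t - aj j) * M t j = N1 j - aj j * N j.
  by rewrite /N1 /N mulr_sumr -sumrB; apply: eq_bigr => t _; rewrite mulrBl.
have h0 := N1_ge0 j; have h1 := N1_leN j.
have [N0|Npos] := eqVneq (N j) 0.
  have : N1 j = 0 by apply/eqP; rewrite eq_le h0 andbT -N0.
  by move=> ->; rewrite N0 mulr0 subr0.
by rewrite /aj mulfVK // subrr.
Qed.

Lemma M_geD t j a : a \in U -> bk a == j -> D t a <= M t j.
Proof.
move=> aU baj; rewrite /M big_mkcond (bigD1_seq a) //= baj lerDl.
by apply: sumr_ge0 => b _; case: ifP.
Qed.

Lemma N_geM t j : M t j <= N j.
Proof.
rewrite /N (bigD1 t) //= lerDl; apply: sumr_ge0 => s _; exact: M_ge0.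
Qed.

Lemma cost t (pt : R) :
  \sum_(c <- S) D' t c * `|pt - c| <=
  \sum_(a <- U) D t a * `|pt - a| + n.+1%:R^-1.
Proof.
have -> : \sum_(c <- S) D' t c * `|pt - c| =
    \sum_(j < n.+1) M t j * `|pt - aj j|.
  rewrite -(G (fun j => M t j * `|pt - aj j|)); apply: eq_bigr => c _.
  by rewrite /D' mulr_suml; apply: eq_bigr => j /eqP ->.
rewrite /M; under eq_bigr do rewrite mulr_suml.
have -> : n.+1%:R^-1 = \sum_(a <- U) D t a * n.+1%:R^-1 :> R.
  by rewrite -mulr_suml Hsum mul1r.
rewrite -big_split /= -part.
apply: ler_sum => j _; rewrite big_seq_cond [X in _ <= X]big_seq_cond.
apply: ler_sum => a /andP[aU baj].
have [Da0|Dpos] := eqVneq (D t a) 0.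
  by rewrite Da0 !mul0r add0r.
have Dp : 0 < D t a by rewrite lt_def Dpos HD0.
have Np : 0 < N j.
  exact: lt_le_trans Dp (le_trans (M_geD _ _ _ aU baj) (N_geM t j)).
have := ajP _ Np; have := bkP _ (HU01 _ aU); rewrite (eqP baj).
move=> /andP[h1 h2] /andP[h3 h4].
have hm : 0 < n.+1%:R :> R by rewrite ltr0n.
have hd : `|a - aj j| <= n.+1%:R^-1.
  rewrite -(ler_pM2r hm) mulVf ?gt_eqF // -[X in _ * X](ger0_norm (ltW hm)).
  rewrite -normrM mulrBl ler_norml; apply/andP; split; lra.
rewrite mulrC [X in _ <= X + _]mulrC -[X in _ <= _ + X]mulrC -mulrDl.
apply: ler_wpM2r; first exact: HD0.
apply: le_trans (ler_distD a _ _) _.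
by rewrite lerD2l.
Qed.

Lemma round_main (p : 'I_T -> R) :
  [/\ uniq S /\ (forall a, a \in S -> 0 <= a <= 1),
      (size S <= n.+1)%N,
      (forall t a, D' t a != 0 -> a \in S),
      lowerCal x D'
    & l1dist p D' <= \sum_(t < T) \sum_(a <- U) D t a * `|p t - a| + T%:R / n.+1%:R].
Proof.
split.
- split; [exact: undup_uniq | exact: S01].
- exact: size_S.
- exact: D'_supp.
- split; last by move=> a _; exact: cal'.
  move=> t; split.
  + apply: (sub_finite_set _ (finite_seq S)) => c /= /D'_supp; exact.
  + exact: D'_ge0.
  + move=> c /= /D'_supp /S01 h; by rewrite /= in_itv /=.
  + rewrite (@fs2seq R (D' t) _ S) ?undup_uniq //; first exact: sumD'.
    exact: D'_supp.
- rewrite /l1dist.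
  have -> : T%:R / n.+1%:R = \sum_(t < T) n.+1%:R^-1 :> R.
    by rewrite sumr_const card_ord mulr_natl.
  rewrite -big_split; apply: ler_sum => t _.
  rewrite (@fs2seq R (D' t) _ S) ?undup_uniq //; first exact: cost.
  + exact: D'_supp.
  + by move=> a ->; rewrite mul0r.
Qed.
End Round.


Lemma l1_ge0 (R : realType) (T : nat) (x p : 'I_T -> R) D :
  lowerCal x D -> 0 <= l1dist p D.
Proof.
move=> [HD _]; apply: sumr_ge0 => t _; apply: fsumr_ge0 => a _.
by case: (HD t) => _ h0 _ _; rewrite mulr_ge0.
Qed.

Lemma D0_cal (R : realType) (T : nat) (x : 'I_T -> R) :
  (0 < T)%N -> (forall t, x t = 0 \/ x t = 1) ->
  lowerCal x (fun _ a => if a == (\sum_(t < T) x t) / T%:R then 1 else 0).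
Proof.
move=> T0 Hx; set mu := _ / _.
have Tn0 : T%:R != 0 :> R by rewrite pnatr_eq0 -lt0n.
have mu01 : 0 <= mu <= 1.
  rewrite divr_ge0 ?ler0n ?sumr_ge0 //=; last by move=> t _; case: (Hx t) => ->.
  rewrite ler_pdivrMr ?ltr0n // mul1r.
  apply: le_trans (_ : _ <= \sum_(t < T) (1 : R)) _; last first.
    by rewrite sumr_const card_ord.
  apply: ler_sum => t _.
  by case: (Hx t) => ->; rewrite ?ler01.
split.
- move=> t; split.
  + apply: (sub_finite_set _ (finite_seq [:: mu])) => c /=.
    by rewrite /fsupp /= mem_seq1; case: (c =P mu) => // _; rewrite eqxx.
  + by move=> a; case: ifP.
  + move=> c; rewrite /fsupp /=; case: (c =P mu) => [-> _|_]; last by rewrite eqxx.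
    by rewrite /= in_itv.
  + rewrite (@fs2seq R _ _ [:: mu]) //; first by rewrite big_seq1 eqxx.
    by move=> a; rewrite mem_seq1; case: (a =P mu) => // _; rewrite eqxx.
- move=> a _; case: eqP => [->|_]; last by apply: big1 => t _; rewrite mulr0.
  under eq_bigr do rewrite mulr1.
  rewrite sumrB sumr_const card_ord -mulr_natr /mu divfK // subrr //.
Qed.

Theorem lemma3 (R : realType) :
  exists C : R, 0 < C /\
  forall (T : nat), (0 < T)%N ->
  forall (x p : 'I_T -> R),
    (forall t, x t = 0 \/ x t = 1) ->
    (forall t, 0 <= p t <= 1) ->
    exists (S : seq R) (D : 'I_T -> R -> R),
      [/\ uniq S /\ (forall a, a \in S -> 0 <= a <= 1),
          (size S)%:R <= C * Num.sqrt (T%:R),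
          (forall t a, D t a != 0 -> a \in S),
          lowerCal x D
        & l1dist p D <= LowerCalDist x p + C * Num.sqrt (T%:R)].
Proof.
exists 3; split => // T T0 x p Hx Hp.
set s := Num.sqrt (T%:R : R).
have s1 : 1 <= s by rewrite -sqrtr1 ler_sqrt ?ler0n // ler1n.
have s0 : 0 < s by apply: lt_le_trans s1.
have m0 : (0 < Num.truncn s)%N by rewrite truncn_gt0.
have := truncn_itv (ltW s0); move: m0.
case Em: (Num.truncn s) => [//|n] _ /andP[ms sm].
set E := [set l1dist p D | D in lowerCal x].
have hE : has_inf E.
  split; first by exists (l1dist p (fun _ a => if a == (\sum_(t < T) x t) / T%:R then 1 else 0)),
    (fun _ a => if a == (\sum_(t < T) x t) / T%:R then 1 else 0) => //; exact: D0_cal.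
  by exists 0 => e [D HD <-]; exact: l1_ge0 HD.
have [e [D HD <-] He] := inf_adherent s0 hE.
have [HDf HDc] := HD.
have [U0 [uU0 HU0]] : exists U : seq R, uniq U /\ (forall t a, D t a != 0 -> a \in U).
  exists (undup (flatten [seq (finmap.enum_fset (fset_set (fsupp (D t)))) | t <- enum 'I_T])).
  split; first exact: undup_uniq.
  move=> t a Hta; rewrite mem_undup; apply/flattenP.
  exists (finmap.enum_fset (fset_set (fsupp (D t)))); first by rewrite map_f // mem_enum.
  case: (HDf t) => fin _ _ _; rewrite in_fset_set //.
  by rewrite inE.
set U := [seq a <- U0 | 0 <= a <= 1].
have HsU : forall t a, D t a != 0 -> a \in U.
  move=> t a Hta; rewrite mem_filter (HU0 _ _ Hta) andbT.
  case: (HDf t) => _ _ hs _; have := hs a Hta.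
  by rewrite /= in_itv.
have HU01 : forall a, a \in U -> 0 <= a <= 1 by move=> a; rewrite mem_filter => /andP[].
have uU : uniq U by rewrite filter_uniq.
have HD0 : forall t a, 0 <= D t a by move=> t a; case: (HDf t).
have Hsum : forall t, \sum_(a <- U) D t a = 1.
  move=> t; case: (HDf t) => _ _ _ <-; rewrite (@fs2seq R (D t) _ U) //.
  exact: HsU t.
have Hcal : forall a, a \in U -> \sum_(t < T) (x t - a) * D t a = 0.
  move=> a /HU01 h; apply: HDc; by rewrite inE /= in_itv /=.
have [[uS S01] szS supS calS costS] := @round_main R T n x D U Hx HD0 uU HU01 Hsum Hcal p.
exists (S R T n x D U), (D' R T n x D U); split => //.
- apply: le_trans (_ : n.+1%:R <= _); first by rewrite ler_nat.
  apply: le_trans ms _; rewrite -[X in X <= _]mul1r ler_wpM2r ?ler1n //.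
  exact: ltW.
- apply: le_trans costS _.
  have -> : \sum_(t < T) \sum_(a <- U) D t a * `|p t - a| = l1dist p D.
    rewrite /l1dist; apply: eq_bigr => t _.
    rewrite (@fs2seq R (D t) _ U) //; first exact: HsU t.
    by move=> a ->; rewrite mul0r.
  have hT : T%:R / n.+1%:R <= 2 * s.
    have hm : 0 < n.+1%:R :> R by rewrite ltr0n.
    rewrite ler_pdivrMr // -[T%:R](@sqr_sqrtr R) ?ler0n // -/s expr2.
    have h2 : s <= 2 * n.+1%:R.
      have h1 : 1 <= n.+1%:R :> R by rewrite ler1n.
      move: sm; rewrite -natr1 => sm'; lra.
    apply: le_trans (ler_wpM2l (ltW s0) h2) _.
    by rewrite mulrA [s * 2]mulrC.
  have hL : LowerCalDist x p = inf E by [].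
  rewrite hL; apply: le_trans (lerD (ltW He) hT) _.
  by rewrite -addrA lerD2l -{1}(mul1r s) -mulrDl.
Qed.
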